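(* Let $\widetilde\nabla$ be a canonical snm-connection on $\mathbb R^3$ determined by the unit constant vector field $\mathsf C$. Let $\vec w\in\mathbb R^3$ be a unit vector and $\gamma:I\to\mathbb R^3$ a curve parametrized by arc length contained in a plane orthogonal to $\vec w$, with unit normal $\mathbf n=\gamma'\times\vec w$ and curvature $\kappa$ defined by $\gamma''=\kappa\mathbf n$. Let $M$ be the cylindrical surface $\psi(s,t)=\gamma(s)+t\vec w$, $s\in I$, $t\in\mathbb R$. Then the sectional curvature of $M$ with respect to $\widetilde\nabla$ at $\psi(s,t)$ is $$K=\frac12\Big(\langle\vec w,\mathsf C\rangle^2+\langle\gamma'(s),\mathsf C\rangle^2-\kappa(s)\langle\mathbf n(s),\mathsf C\rangle\Big).$$
   Context: Let $\langle\cdot,\cdot\rangle$ be the Euclidean metric on $\mathbb R^3$ and $\widetilde\nabla^0$ its Levi-Civita connection (the ordinary directional derivative). Given a smooth vector field $\mathsf C$ on $\mathbb R^3$, the semi-symmetric non-metric connection (snm-connection) determined by $\mathsf C$ is $\widetilde\nabla_XY=\widetilde\nabla^0_XY+\langle \mathsf C,Y\rangle X$. It is called canonical if $\mathsf C$ is a constant vector field with $|\mathsf C|=1$. Its curvature tensor is $\widetilde R(X,Y)Z=\widetilde\nabla_X\widetilde\nabla_YZ-\widetilde\nabla_Y\widetilde\nabla_XZ-\widetilde\nabla_{[X,Y]}Z$. For a surface $M$ immersed in $\mathbb R^3$, the induced connection is $\nabla_XY=(\widetilde\nabla_XY)^{\top}$ (tangential component) for tangent vector fields $X,Y$, with curvature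 tensor $R$ defined by the same formula as $\widetilde R$, and the sectional curvature of $M$ with respect to $\widetilde\nabla$ at $p$ is $K(p)=\frac12\big(\langle R(e_1,e_2)e_2,e_1\rangle+\langle R(e_2,e_1)e_1,e_2\rangle\big)$ for an orthonormal basis $\{e_1,e_2\}$ of $T_pM$ (independent of the basis). *)

(* Defs.v *)
From Stdlib Require Import Reals.
From Coquelicot Require Import Coquelicot.
Open Scope R_scope.

Definition vec3 := (R * R * R)%type.
Definition vx (v : vec3) : R := fst (fst v).
Definition vy (v : vec3) : R := snd (fst v).
Definition vz (v : vec3) : R := snd v.
Definition mkv (a b c : R) : vec3 := (a, b, c).

Definition vadd (u v : vec3) : vec3 := mkv (vx u + vx v) (vy u + vy v) (vz u + vz v).
Definition vscal (k : R) (v : vec3) : vec3 := mkv (k * vx v) (k * vy v) (k * vz v).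
Definition vsub (u v : vec3) : vec3 := vadd u (vscal (-1) v).
Definition dot (u v : vec3) : R := vx u * vx v + vy u * vy v + vz u * vz v.
Definition vnorm (v : vec3) : R := sqrt (dot v v).
Definition cross (u v : vec3) : vec3 :=
  mkv (vy u * vz v - vz u * vy v) (vz u * vx v - vx u * vz v) (vx u * vy v - vy u * vx v).

Definition dcurve (g : R -> vec3) (s : R) : vec3 :=
  mkv (Derive (fun x => vx (g x)) s) (Derive (fun x => vy (g x)) s)
      (Derive (fun x => vz (g x)) s).

Definition smooth_curve_on (I : R -> Prop) (g : R -> vec3) : Prop :=
  forall (k : nat) (s : R), I s ->
    ex_derive_n (fun x => vx (g x)) k s /\
    ex_derive_n (fun x => vy (g x)) k s /\
    ex_derive_n (fun x => vz (g x)) k s.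

Definition vfield := R -> R -> vec3.

Definition d_s (F : vfield) : vfield := fun s t => dcurve (fun x => F x t) s.
Definition d_t (F : vfield) : vfield := fun s t => dcurve (fun y => F s y) t.

Definition unit_normal (psi : vfield) (s t : R) : vec3 :=
  let N := cross (d_s psi s t) (d_t psi s t) in vscal (/ vnorm N) N.
Definition tang (psi : vfield) (s t : R) (v : vec3) : vec3 :=
  let N := unit_normal psi s t in vsub v (vscal (dot v N) N).

Definition cfield (psi : vfield) (a b : R) : vfield :=
  fun s t => vadd (vscal a (d_s psi s t)) (vscal b (d_t psi s t)).

(* Induced snm-connection on M: for X = a psi_s + b psi_t and a tangent field Z,
   nabla_X Z = ( D_X Z + <C, Z> X )^T,  where D_X Z = a d_s Z + b d_t Z
   (ambient: tilde-nabla_X Y = tilde-nabla^0_X Y + <C,Y> X). *)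
Definition nabla (C : vec3) (psi : vfield) (a b : R) (Z : vfield) : vfield :=
  fun s t =>
    tang psi s t
      (vadd (vadd (vscal a (d_s Z s t)) (vscal b (d_t Z s t)))
            (vscal (dot C (Z s t)) (cfield psi a b s t))).

(* Curvature tensor R(X,Y)Z for X = a1 psi_s + b1 psi_t, Y = a2 psi_s + b2 psi_t
   (constant-coefficient coordinate combinations, so [X,Y] = 0):
   R(X,Y)Z = nabla_X nabla_Y Z - nabla_Y nabla_X Z. *)
Definition curv (C : vec3) (psi : vfield) (a1 b1 a2 b2 : R) (Z : vfield) : vfield :=
  fun s t => vsub (nabla C psi a1 b1 (nabla C psi a2 b2 Z) s t)
                  (nabla C psi a2 b2 (nabla C psi a1 b1 Z) s t).

Definition sect_expr (C : vec3) (psi : vfield) (a1 b1 a2 b2 s t : R) : R :=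
  let E1 := cfield psi a1 b1 in
  let E2 := cfield psi a2 b2 in
  / 2 * (dot (curv C psi a1 b1 a2 b2 E2 s t) (E1 s t)
         + dot (curv C psi a2 b2 a1 b1 E1 s t) (E2 s t)).

Definition cylinder (g : R -> vec3) (w : vec3) : vfield :=
  fun s t => vadd (g s) (vscal t w).

(* Main.v *)
Require Import Defs.
From Stdlib Require Import Reals Lra Psatz FunctionalExtensionality.
From Coquelicot Require Import Coquelicot.
Open Scope R_scope.

Lemma vec_eq (u v : vec3) : vx u = vx v -> vy u = vy v -> vz u = vz v -> u = v.
Proof. destruct u as [[u1 u2] u3], v as [[v1 v2] v3]; cbv; intros -> -> ->; reflexivity. Qed.

Ltac vcbv := cbv [vx vy vz mkv vadd vscal vsub dot cross fst snd] in *.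

Definition Ev (g : R -> vec3) (w : vec3) (a b : R) (x : R) : vec3 :=
  vadd (vscal a (dcurve g x)) (vscal b w).

Lemma tang_proj (n v u : vec3) (k : R) : dot n n = 1 -> dot u n = 0 ->
  vx v = k * vx n + vx u -> vy v = k * vy n + vy u -> vz v = k * vz n + vz u ->
  vsub v (vscal (dot v n) n) = u.
Proof.
  intros Hn Hu Hx Hy Hz.
  assert (Hd : dot v n = k * dot n n + dot u n) by (unfold dot; rewrite Hx, Hy, Hz; ring).
  rewrite Hd, Hn, Hu.
  apply vec_eq; vcbv; rewrite ?Hx, ?Hy, ?Hz; ring.
Qed.

Lemma dot_comb (p q r u : R) (X Y Z W V : vec3) :
  dot (vsub (vadd (vscal p X) (vscal q Y)) (vadd (vscal r Z) (vscal u W))) V =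
  p * dot X V + q * dot Y V - r * dot Z V - u * dot W V.
Proof. vcbv; ring. Qed.

Lemma scalar_final (a1 b1 a2 b2 P W k N : R) :
  a1^2 + b1^2 = 1 -> a2^2 + b2^2 = 1 -> a1*a2 + b1*b2 = 0 ->
  /2 * (((a2*P+b2*W)^2 - a2^2*k*N) + ((a1*P+b1*W)^2 - a1^2*k*N)) =
  /2 * (W^2 + P^2 - k*N).
Proof.
  intros H1 H2 H3.
  set (D := a1*b2 - a2*b1).
  assert (HD : D^2 = 1).
  { replace (D^2) with ((a1^2+b1^2)*(a2^2+b2^2) - (a1*a2+b1*b2)^2) by (unfold D; ring).
    rewrite H1, H2, H3; ring. }
  assert (Ha1 : a1 = D*b2).
  { assert (E : a1 - D*b2 = a1*(1 - (a2^2+b2^2)) + a2*(a1*a2+b1*b2)) by (unfold D; ring).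
    rewrite H2, H3 in E. lra. }
  assert (Hb1 : b1 = - D*a2).
  { assert (E : b1 + D*a2 = b1*(1 - (a2^2+b2^2)) + b2*(a1*a2+b1*b2)) by (unfold D; ring).
    rewrite H2, H3 in E. lra. }
  clearbody D.
  assert (C1 : a1^2 + a2^2 = 1) by (rewrite Ha1; transitivity (D^2*b2^2+a2^2); [ring| rewrite HD; lra]).
  assert (C2 : b1^2 + b2^2 = 1) by (rewrite Hb1; transitivity (D^2*a2^2+b2^2); [ring| rewrite HD; lra]).
  assert (C3 : a1*b1 + a2*b2 = 0) by (rewrite Ha1, Hb1; transitivity ((1-D^2)*a2*b2); [ring| rewrite HD; ring]).
  replace (((a2*P+b2*W)^2 - a2^2*k*N) + ((a1*P+b1*W)^2 - a1^2*k*N))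
    with ((a1^2+a2^2)*P^2 + 2*(a1*b1+a2*b2)*P*W + (b1^2+b2^2)*W^2 - (a1^2+a2^2)*k*N) by ring.
  rewrite C1, C2, C3. ring.
Qed.
Ltac vs := cbv [mkv vadd vscal vsub dot cross dcurve]; cbn [vx vy vz fst snd].
Ltac vsh := cbv [mkv vadd vscal vsub dot cross dcurve] in *; cbn [vx vy vz fst snd] in *.
Lemma g_split (g : R -> vec3) : exists g1 g2 g3 : R -> R, g = fun x => mkv (g1 x) (g2 x) (g3 x).
Proof. exists (fun x => vx (g x)), (fun x => vy (g x)), (fun x => vz (g x)).
 apply functional_extensionality. intro x. destruct (g x) as [[? ?] ?]; reflexivity. Qed.
Ltac prep g := let g1 := fresh "g1" in let g2 := fresh "g2" in let g3 := fresh "g3" in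
  destruct (g_split g) as [g1 [g2 [g3 ->]]].

Definition D2 (g : R -> vec3) (x : R) : Prop :=
  ex_derive (fun x => vx (g x)) x /\ ex_derive (fun x => vy (g x)) x /\
  ex_derive (fun x => vz (g x)) x /\
  ex_derive (fun x => Derive (fun x => vx (g x)) x) x /\
  ex_derive (fun x => Derive (fun x => vy (g x)) x) x /\
  ex_derive (fun x => Derive (fun x => vz (g x)) x) x.

Lemma D2_of (a b : Rbar) g : smooth_curve_on (fun s => Rbar_lt a s /\ Rbar_lt s b) g ->
  forall x : R, Rbar_lt a x -> Rbar_lt x b -> D2 g x.
Proof.
  intros H x H1 H2. destruct (H 1%nat x (conj H1 H2)) as [A1 [A2 A3]].
  destruct (H 2%nat x (conj H1 H2)) as [B1 [B2 B3]].
  repeat split; assumption.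
Qed.

Lemma ds_psi g w t x : D2 g x -> d_s (cylinder g w) x t = dcurve g x.
Proof.
  prep g. destruct w as [[w1 w2] w3]. intros [H1 [H2 [H3 _]]]. unfold d_s, cylinder. vsh.
  f_equal; [f_equal|]; apply is_derive_unique; auto_derive; auto; ring.
Qed.

Lemma dt_psi g w s t : d_t (cylinder g w) s t = w.
Proof.
  prep g. unfold d_t, cylinder. destruct w as [[w1 w2] w3]. vsh.
  f_equal; [f_equal|]; apply is_derive_unique; auto_derive; auto; ring.
Qed.

Lemma gw0 (a b : Rbar) g w c (x : R) :
  (forall s : R, Rbar_lt a s -> Rbar_lt s b -> dot (g s) w = c) ->
  Rbar_lt a x -> Rbar_lt x b -> D2 g x -> dot (dcurve g x) w = 0.
Proof.
  intros Hc Ha Hb [H1 [H2 [H3 _]]].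
  assert (E : Derive (fun s => dot (g s) w) x = Derive (fun _ => c) x).
  { apply Derive_ext_loc. apply locally_interval with a b; auto. }
  rewrite Derive_const in E. rewrite <- E. symmetry.
  apply is_derive_unique. prep g. destruct w as [[w1 w2] w3]. unfold dot. vsh. auto_derive; repeat split; auto. ring.
Qed.

Lemma un_psi g w x t : D2 g x ->
  dot (dcurve g x) (dcurve g x) = 1 -> dot w w = 1 -> dot (dcurve g x) w = 0 ->
  unit_normal (cylinder g w) x t = cross (dcurve g x) w.
Proof.
  intros HD Hp Hw Hpw. unfold unit_normal. rewrite ds_psi by auto. rewrite dt_psi.
  set (p := dcurve g x) in *.
  assert (HN : dot (cross p w) (cross p w) = 1).
  { transitivity (dot p p * dot w w - dot p w ^ 2). { vs; ring. }
    rewrite Hp, Hw, Hpw. ring. }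
  unfold vnorm. rewrite HN, sqrt_1, Rinv_1.
  apply vec_eq; vs; ring.
Qed.

Lemma cf_psi g w a b x t : D2 g x -> cfield (cylinder g w) a b x t = Ev g w a b x.
Proof. intros HD. unfold cfield, Ev. rewrite ds_psi by auto. rewrite dt_psi. reflexivity. Qed.

Lemma ds_loc (a b : Rbar) (Z : vfield) z (s y : R) : Rbar_lt a s -> Rbar_lt s b ->
  (forall x : R, Rbar_lt a x -> Rbar_lt x b -> Z x y = z x) -> d_s Z s y = dcurve z s.
Proof.
  intros Ha Hb H. unfold d_s, dcurve, mkv.
  f_equal; [f_equal|]; apply Derive_ext_loc; apply locally_interval with a b; auto;
    intros; rewrite H; auto.
Qed.

Lemma dt_const (Z : vfield) s t v : (forall y, Z s y = v) -> d_t Z s t = mkv 0 0 0.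
Proof.
  intros H. unfold d_t, dcurve.
  rewrite (Derive_ext _ (fun _ => vx v)) by (intro; rewrite H; auto).
  rewrite (Derive_ext (fun y => vy (Z s y)) (fun _ => vy v)) by (intro; rewrite H; auto).
  rewrite (Derive_ext (fun y => vz (Z s y)) (fun _ => vz v)) by (intro; rewrite H; auto).
  rewrite !Derive_const. reflexivity.
Qed.

Lemma dEv g w aj bj x : D2 g x -> dcurve (Ev g w aj bj) x = vscal aj (dcurve (dcurve g) x).
Proof.
  prep g. destruct w as [[w1 w2] w3]. intros [_ [_ [_ [H1 [H2 H3]]]]]. unfold Ev. vsh.
  f_equal; [f_equal|]; apply is_derive_unique; auto_derive; auto; ring.
Qed.

Lemma dEE C g w aj bj a' b' s : D2 g s ->
  dcurve (fun x => vscal (dot C (Ev g w aj bj x)) (Ev g w a' b' x)) s =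
  vadd (vscal (dot C (vscal aj (dcurve (dcurve g) s))) (Ev g w a' b' s))
       (vscal (dot C (Ev g w aj bj s)) (vscal a' (dcurve (dcurve g) s))).
Proof.
  prep g. destruct w as [[w1 w2] w3]. destruct C as [[c1 c2] c3]. intros [G1 [G2 [G3 [H1 [H2 H3]]]]]. unfold Ev. vsh.
  f_equal; [f_equal|]; apply is_derive_unique; auto_derive; repeat split; auto; ring.
Qed.

Definition good (g : R -> vec3) (w : vec3) (kappa : R -> R) (x : R) : Prop :=
  D2 g x /\ dot (dcurve g x) (dcurve g x) = 1 /\ dot (dcurve g x) w = 0 /\
  dcurve (dcurve g) x = vscal (kappa x) (cross (dcurve g x) w).

Lemma nabla_unfold C psi a b Z s t : nabla C psi a b Z s t =
  tang psi s t (vadd (vadd (vscal a (d_s Z s t)) (vscal b (d_t Z s t)))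
            (vscal (dot C (Z s t)) (cfield psi a b s t))).
Proof. reflexivity. Qed.

Lemma nn1 p w : dot p p = 1 -> dot w w = 1 -> dot p w = 0 -> dot (cross p w) (cross p w) = 1.
Proof.
  intros Hp Hw Hpw. transitivity (dot p p * dot w w - dot p w ^ 2). { vs; ring. }
  rewrite Hp, Hw, Hpw. ring.
Qed.

Lemma N1 (a b : Rbar) C g w kappa A B aj bj (x y : R) :
  (forall z : R, Rbar_lt a z -> Rbar_lt z b -> good g w kappa z) -> dot w w = 1 ->
  Rbar_lt a x -> Rbar_lt x b ->
  nabla C (cylinder g w) A B (cfield (cylinder g w) aj bj) x y =
  vscal (dot C (Ev g w aj bj x)) (Ev g w A B x).
Proof.
  intros Hg Hw Ha Hb. destruct (Hg x Ha Hb) as [HD [Hp [Hpw Hk]]].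
  rewrite nabla_unfold.
  rewrite (ds_loc a b _ (Ev g w aj bj) x y Ha Hb)
    by (intros; apply cf_psi; apply Hg; auto).
  rewrite (dt_const _ x y (Ev g w aj bj x)) by (intros; apply cf_psi; auto).
  rewrite dEv by auto. rewrite Hk. rewrite !cf_psi by auto.
  unfold tang. rewrite un_psi by auto.
  apply tang_proj with (k := A*aj*kappa x).
  - apply nn1; auto.
  - unfold Ev. vs. ring.
  - unfold Ev. vs. ring.
  - unfold Ev. vs. ring.
  - unfold Ev. vs. ring.
Qed.

Lemma N2 (a b : Rbar) C g w kappa A B A' B' aj bj (s t : R) :
  (forall z : R, Rbar_lt a z -> Rbar_lt z b -> good g w kappa z) -> dot w w = 1 ->
  Rbar_lt a s -> Rbar_lt s b ->
  nabla C (cylinder g w) A B (nabla C (cylinder g w) A' B' (cfield (cylinder g w) aj bj)) s t =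
  vadd (vscal (A*aj*kappa s*dot C (cross (dcurve g s) w)) (Ev g w A' B' s))
       (vscal (dot C (Ev g w aj bj s) * dot C (Ev g w A' B' s)) (Ev g w A B s)).
Proof.
  intros Hg Hw Ha Hb. destruct (Hg s Ha Hb) as [HD [Hp [Hpw Hk]]].
  rewrite nabla_unfold.
  rewrite (ds_loc a b _ (fun x => vscal (dot C (Ev g w aj bj x)) (Ev g w A' B' x)) s t Ha Hb)
    by (intros; apply (N1 a b C g w kappa); auto).
  rewrite (dt_const _ s t (vscal (dot C (Ev g w aj bj s)) (Ev g w A' B' s)))
    by (intros; apply (N1 a b C g w kappa); auto).
  rewrite (N1 a b C g w kappa) by auto.
  rewrite dEE by auto. rewrite Hk. rewrite !cf_psi by auto.
  unfold tang. rewrite un_psi by auto.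
  apply tang_proj with (k := A * dot C (Ev g w aj bj s) * A' * kappa s).
  - apply nn1; auto.
  - unfold Ev. vs. ring.
  - unfold Ev. vs. ring.
  - unfold Ev. vs. ring.
  - unfold Ev. vs. ring.
Qed.

Lemma cEv C g w a b x : dot C (Ev g w a b x) = a * dot C (dcurve g x) + b * dot C w.
Proof. unfold Ev. vs. ring. Qed.

Lemma EvEv g w a b a' b' x : dot (Ev g w a b x) (Ev g w a' b' x) =
  a*a'*dot (dcurve g x) (dcurve g x) + (a*b'+a'*b)*dot (dcurve g x) w + b*b'*dot w w.
Proof. unfold Ev. vs. ring. Qed.

Lemma dot_sym u v : dot u v = dot v u.
Proof. unfold dot; ring. Qed.

Theorem theorem3p1
  (C : vec3) (w : vec3) (a b : Rbar) (g : R -> vec3) (kappa : R -> R) :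
  (* canonical snm-connection: C constant with |C| = 1 *)
  dot C C = 1 ->
  (* w a unit vector *)
  dot w w = 1 ->
  (* gamma smooth on the open interval I = (a, b) *)
  smooth_curve_on (fun s => Rbar_lt a s /\ Rbar_lt s b) g ->
  (* parametrized by arc length *)
  (forall s : R, Rbar_lt a s -> Rbar_lt s b -> dot (dcurve g s) (dcurve g s) = 1) ->
  (* contained in a plane orthogonal to w *)
  (exists c : R, forall s : R, Rbar_lt a s -> Rbar_lt s b -> dot (g s) w = c) ->
  (* curvature: gamma'' = kappa n,  n = gamma' x w *)
  (forall s : R, Rbar_lt a s -> Rbar_lt s b ->
     dcurve (dcurve g) s = vscal (kappa s) (cross (dcurve g s) w)) ->
  forall s t : R, Rbar_lt a s -> Rbar_lt s b ->
  forall a1 b1 a2 b2 : R,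
    let e1 := cfield (cylinder g w) a1 b1 s t in
    let e2 := cfield (cylinder g w) a2 b2 s t in
    (* {e1, e2} an orthonormal basis of T_{psi(s,t)} M *)
    dot e1 e1 = 1 -> dot e2 e2 = 1 -> dot e1 e2 = 0 ->
    sect_expr C (cylinder g w) a1 b1 a2 b2 s t =
      / 2 * ((dot w C) ^ 2 + (dot (dcurve g s) C) ^ 2
             - kappa s * dot (cross (dcurve g s) w) C).
Proof.
  intros HC Hw Hsm Hunit [c Hpl] Hk s t Ha Hb a1 b1 a2 b2 e1 e2 H1 H2 H3.
  assert (Hg : forall z : R, Rbar_lt a z -> Rbar_lt z b -> good g w kappa z).
  { intros z Hza Hzb. assert (HD := D2_of a b g Hsm z Hza Hzb).
    split; [exact HD|]. split; [auto|]. split; [|auto].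
    apply (gw0 a b g w c); auto. }
  destruct (Hg s Ha Hb) as [HD [Hp [Hpw _]]].
  unfold e1, e2 in *. clear e1 e2.
  rewrite !cf_psi in H1 by auto. rewrite !cf_psi in H2 by auto. rewrite !cf_psi in H3 by auto.
  unfold sect_expr. cbv zeta. unfold curv.
  rewrite !(N2 a b C g w kappa) by auto. rewrite !cf_psi by auto.
  rewrite !dot_comb.
  rewrite (dot_sym (Ev g w a2 b2 s) (Ev g w a1 b1 s)), H1, H2, H3.
  rewrite !cEv.
  rewrite EvEv, Hp, Hpw, Hw in H1, H2, H3.
  rewrite (dot_sym w C), (dot_sym (dcurve g s) C), (dot_sym (cross _ _) C).
  set (P := dot C (dcurve g s)). set (W := dot C w). set (N := dot C (cross (dcurve g s) w)).
  transitivity (/2*(((a2*P+b2*W)^2 - a2^2*kappa s*N) + ((a1*P+b1*W)^2 - a1^2*kappa s*N))).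
  { ring. }
  apply scalar_final; nra.
Qed.
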